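(* Let $(G,+)$ be an abelian group with identity $0$. Let $M$ be a matroid over $G$ and let $N$ be a paving matroid over $G$, both of rank $n$, such that $|E(M)|=|E(N)|=n+1<p(G)$. Assume there exists a total order $\preceq$ on $E(M)\cup E(N)\cup (E(M)+E(N))\cup\{0\}$ that is compatible with the group structure of $G$, such that $E(M)$ and $E(N)$ are both positive, and $\max(E(M))\notin E(M)+E(N)$. Then $M$ is matched to $N$.
   Context: $p(G)$ denotes the smallest cardinality of a nonzero subgroup of $G$. $A+B=\{a+b: a\in A, b\in B\}$. A total order $\preceq$ on a subset $A\subseteq G$ is compatible with the group structure if for all $a,b,c\in A$, $a\preceq b$ implies $a+c\preceq b+c$. With respect to such an order on a set containing $0$, an element $x$ is positive if $0\prec x$ (i.e. $0\preceq x$ and $x\ne 0$), and a set is positive if all its elements are positive. A matroid over $G$ is a matroid $M$ whose finite ground set $E(M)$ is a subset of $G$; all matroids are assumed loopless. A matroid of rank $n$ is paving if every $(n-1)$-element subset of its ground set is independent. For matroids $M,N$ over $G$ with $r(M)=r(N)=n>0$ and bases $\mathcal{M}=\{a_1,\dots,a_n\}$ of $M$ and $\mathcal{N}=\{b_1,\dots,b_n\}$ of $N$, $\mathcal{M}$ is matched to $\mathcal{N}$ if there is a permutation $\pi\in S_n$ with $a_i+b_{\pi(i)}\notin E(M)$ for all $i$. $M$ is matched to $N$ if for every basis $\mathcal{M}$ of $M$ there exists a basis $\mathcal{N}$ of $N$ such that $\mathcal{M}$ is matched to $\mathcal{N}$. *)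

(* Defs.v *)
From HB Require Import structures.
From mathcomp Require Import all_boot all_order all_algebra.
From mathcomp Require Import finmap.
Set Implicit Arguments. Unset Strict Implicit. Unset Printing Implicit Defensive.
Import GRing.Theory.
Local Open Scope fset_scope.
Local Open Scope ring_scope.

(* p(G) : smallest cardinality of a nonzero subgroup of G.                 *)
(* [lt_pG G k] means  k < p(G) , i.e. every nonzero subgroup of G has more *)
(* than k elements (cannot be covered by a list of k elements).            *)
Definition is_subgroup (G : zmodType) (H : G -> Prop) : Prop :=
  [/\ H 0, (forall x y, H x -> H y -> H (x + y)) & (forall x, H x -> H (- x))].

Definition lt_pG (G : zmodType) (k : nat) : Prop :=
  forall H : G -> Prop, is_subgroup H -> (exists x, H x /\ x <> 0) ->
    ~ (exists s : seq G, (size s <= k)%N /\ forall x, H x -> x \in s).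

Record matroid (G : zmodType) := Matroid {
  ground : {fset G};
  indep : {fset G} -> bool;
  indep_sub : forall A, indep A -> A `<=` ground;
  indep0 : indep fset0;
  indep_hered : forall A B, A `<=` B -> indep B -> indep A;
  indep_aug : forall A B, indep A -> indep B -> (#|` A| < #|` B|)%N ->
     exists2 x, x \in B `\` A & indep (x |` A)
}.

Definition loopless (G : zmodType) (M : matroid G) : Prop :=
  forall x, x \in ground M -> indep M [fset x].

Definition has_rank (G : zmodType) (M : matroid G) (n : nat) : Prop :=
  (exists2 B, indep M B & #|` B| = n) /\
  (forall A, indep M A -> (#|` A| <= n)%N).

Definition basis (G : zmodType) (M : matroid G) (B : {fset G}) : Prop :=
  indep M B /\ (forall A, indep M A -> B `<=` A -> A = B).

Definition paving (G : zmodType) (M : matroid G) (n : nat) : Prop :=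
  has_rank M n /\
  forall A, A `<=` ground M -> #|` A| = n.-1 -> indep M A.

(* basis BM = {a_1..a_n} is matched to BN = {b_1..b_n} (w.r.t. E(M)):
   some listing s of BN, i.e. (b_pi(1), ..., b_pi(n)), satisfies
   a_i + b_pi(i) \notin E(M) for all i. *)
Definition bases_matched (G : zmodType) (M : matroid G) (BM BN : {fset G}) : Prop :=
  exists s : seq G, perm_eq s (enum_fset BN) /\
    all2 (fun a b => a + b \notin ground M) (enum_fset BM) s.

Definition matched_to (G : zmodType) (M N : matroid G) : Prop :=
  forall BM, basis M BM -> exists2 BN, basis N BN & bases_matched M BM BN.

Definition in_sumset (G : zmodType) (A B : {fset G}) (x : G) : Prop :=
  exists a b, [/\ a \in A, b \in B & x = a + b].

Definition order_dom (G : zmodType) (M N : matroid G) (x : G) : Prop :=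
  [\/ x \in ground M, x \in ground N, in_sumset (ground M) (ground N) x | x = 0].

Definition total_order_on (G : zmodType) (S : G -> Prop) (le : G -> G -> bool) : Prop :=
  [/\ (forall x, S x -> le x x),
      (forall x y, S x -> S y -> le x y -> le y x -> x = y),
      (forall x y z, S x -> S y -> S z -> le x y -> le y z -> le x z)
    & (forall x y, S x -> S y -> le x y || le y x)].

Definition compatible_on (G : zmodType) (S : G -> Prop) (le : G -> G -> bool) : Prop :=
  forall a b c, S a -> S b -> S c -> S (a + c) -> S (b + c) ->
    le a b -> le (a + c) (b + c).

Definition positive_el (G : zmodType) (le : G -> G -> bool) (x : G) : Prop :=
  le 0 x /\ x <> 0.

(* Main.v *)
Require Import Defs.
From HB Require Import structures.
From mathcomp Require Import all_boot all_order all_algebra.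
From mathcomp Require Import finmap zify.
Import GRing.Theory.
Local Open Scope fset_scope.

Lemma all2_cat_ins (S T : Type) (r : S -> T -> bool) (p1 p2 : seq S) (t d : seq T) a b :
  size p1 = size t -> all2 r (p1 ++ p2) (t ++ d) -> r a b ->
  all2 r (p1 ++ a :: p2) (t ++ b :: d).
Proof.
elim: p1 t => [|x p1 IH] [|y t] //=.
  by move=> _ H1 ->.
by move=> [Hs] /andP[H1 H2] Hab; rewrite H1 IH.
Qed.

Lemma ex_minimal (T : eqType) (lt : T -> T -> bool) (A : seq T) :
  {in A, forall a, ~~ lt a a} -> {in A & A & A, forall x y z, lt x y -> lt y z -> lt x z} ->
  forall s, s != [::] -> {subset s <= A} -> exists2 x, x \in s & forall y, y \in s -> ~~ lt y x.
Proof.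
move=> Hirr Htr; elim=> [//|x s IH] _ Hsub.
have xA : x \in A by apply: Hsub; rewrite inE eqxx.
case: (eqVneq s [::]) => [->|sn].
  by exists x; rewrite ?inE // => y; rewrite inE => /eqP ->; apply: Hirr.
have [|m ms Hm] := IH sn. by move=> y ys; apply: Hsub; rewrite inE ys orbT.
have mA : m \in A by apply: Hsub; rewrite inE ms orbT.
case Hxm: (lt x m).
  exists x; first by rewrite inE eqxx.
  move=> y; rewrite inE => /orP[/eqP ->|ys]; first by apply: Hirr.
  apply/negP => Hyx; have := Hm y ys; rewrite (Htr y x m) //.
  by apply: Hsub; rewrite inE ys orbT.
exists m; first by rewrite inE ms orbT.
move=> y; rewrite inE => /orP[/eqP ->|ys]; first by rewrite Hxm.
exact: Hm.
Qed.

Lemma greedy (T : eqType) (bad lt : T -> T -> bool) n : forall (A B : seq T),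
  size A = n -> size B = n ->
  {in A, forall a, ~~ lt a a} -> {in A & A & A, forall x y z, lt x y -> lt y z -> lt x z} ->
  {in A, forall a, count (bad a) B <= count (lt a) A} ->
  exists s, perm_eq s B /\ all2 (fun a b => ~~ bad a b) A s.
Proof.
elim: n => [|n IH] A B.
  by move/eqP; rewrite size_eq0 => /eqP -> /eqP; rewrite size_eq0 => /eqP -> *; exists [::].
move=> HA HB Hirr Htr Hc.
have [|a0 a0A Hmin] := @ex_minimal _ _ A Hirr Htr A _ (fun x h => h).
  by rewrite -size_eq0 HA.
have Hb : has (predC (bad a0)) B.
  rewrite has_count.
  have h1 := count_predC (bad a0) B.
  have := Hc a0 a0A.
  have : count (lt a0) A < size A.
    rewrite -(count_predC (lt a0)) -addn1 leq_add2l -has_count.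
    by apply/hasP; exists a0 => //=; apply: Hirr.
  lia.
have [b0 b0B Hb0] := hasP Hb.
case/splitPr: a0A Hmin Hirr Htr Hc HA => p1 p2 Hmin Hirr Htr Hc HA.
have sub : {subset p1 ++ p2 <= p1 ++ a0 :: p2}.
  by move=> y; rewrite !mem_cat inE => /orP[->|->]; rewrite ?orbT.
have [|||||s' [Hp Ha]] := IH (p1 ++ p2) (rem b0 B).
- by move: HA; rewrite !size_cat /=; lia.
- by rewrite size_rem // HB.
- by move=> y /sub; apply: Hirr.
- by move=> x y z /sub xA /sub yA /sub zA; apply: Htr.
- move=> a aA.
  have := Hc a (sub a aA).
  rewrite ((permP (perm_to_rem b0B)) (bad a)) /= !count_cat /=.
  have := Hmin a (sub a aA); case: (lt a a0) => //= _.
  case: (bad a b0) => /=; lia.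
have Hsz : size (p1 ++ p2) = size s' by apply/eqP; move: Ha; rewrite all2E => /andP[].
exists (take (size p1) s' ++ b0 :: drop (size p1) s'); split.
  rewrite (perm_catCA _ [:: b0] _) /= cat_take_drop.
  by rewrite (permPr (perm_to_rem b0B)) perm_cons.
apply: all2_cat_ins => //.
  by rewrite size_take; move: Hsz; rewrite size_cat; case: ltnP; lia.
by rewrite cat_take_drop.
Qed.

Lemma count_sub (T : eqType) (P : pred T) (s1 s2 : seq T) :
  uniq s1 -> {subset s1 <= s2} -> (count P s1 <= count P s2)%N.
Proof.
move=> u sub; rewrite -!size_filter; apply: uniq_leq_size; first exact: filter_uniq.
by move=> x; rewrite !mem_filter => /andP[-> /sub].
Qed.

Lemma count_sub2 (T : eqType) (P : pred T) (s1 s2 : seq T) :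
  uniq s1 -> {subset s1 <= s2} -> (count P s2 <= count P s1 + (size s2 - size s1))%N.
Proof.
move=> u sub; have := count_sub _ (predC P) _ _ u sub.
have := count_predC P s1; have := count_predC P s2; lia.
Qed.

Lemma ex_max (T : eqType) (D : T -> Prop) (le : T -> T -> bool) :
  (forall x, D x -> le x x) ->
  (forall x y z, D x -> D y -> D z -> le x y -> le y z -> le x z) ->
  (forall x y, D x -> D y -> le x y || le y x) ->
  forall s, s != [::] -> (forall x, x \in s -> D x) ->
  exists2 x, x \in s & forall y, y \in s -> le y x.
Proof.
move=> Hr Ht Htot; elim=> [//|x s IH] _ Hs.
have Dx : D x by apply: Hs; rewrite inE eqxx.
case: (eqVneq s [::]) => [->|sn].
  by exists x; rewrite ?inE // => y; rewrite inE => /eqP ->; apply: Hr.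
have [|m ms Hm] := IH sn. by move=> y ys; apply: Hs; rewrite inE ys orbT.
have Dm : D m by apply: Hs; rewrite inE ms orbT.
case/orP: (Htot x m Dx Dm) => Hxm.
  exists m; first by rewrite inE ms orbT.
  by move=> y; rewrite inE => /orP[/eqP ->|ys]; [|exact: Hm].
exists x; first by rewrite inE eqxx.
move=> y; rewrite inE => /orP[/eqP ->|ys]; first exact: Hr.
by apply: (Ht y m x) => //; [apply: Hs; rewrite inE ys orbT|exact: Hm].
Qed.

Local Open Scope ring_scope.

Theorem theorem2p10 (G : zmodType) (M N : matroid G) (n : nat)
  (le : G -> G -> bool) :
  loopless M -> loopless N ->
  has_rank M n -> paving N n ->
  #|` ground M| = n.+1 -> #|` ground N| = n.+1 -> lt_pG G n.+1 ->
  total_order_on (order_dom M N) le ->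
  compatible_on (order_dom M N) le ->
  (forall x, x \in ground M -> positive_el le x) ->
  (forall x, x \in ground N -> positive_el le x) ->
  (forall m, m \in ground M -> (forall x, x \in ground M -> le x m) ->
     ~ in_sumset (ground M) (ground N) m) ->
  matched_to M N.
Proof.
move=> _ _ [[B0 B0i B0c] Mmax] [[[B Bi Bc] Nmax] _] cM _ _ [Hr Hanti Htrans Htot] Hcomp posM posN Hmax.
move=> BM [BMi BMmax].
have DM : forall x, x \in ground M -> order_dom M N x by move=> x h; apply: Or41.
have DN : forall x, x \in ground N -> order_dom M N x by move=> x h; apply: Or42.
have DS : forall a b, a \in ground M -> b \in ground N -> order_dom M N (a + b).
  by move=> a b ha hb; apply: Or43; exists a, b.
have D0 : order_dom M N 0 by apply: Or44.
have Hab : forall a b, a \in ground M -> b \in ground N -> le a (a + b) && (a != a + b).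
  move=> a b ha hb; apply/andP; split.
    have h1 : order_dom M N (0 + a) by rewrite add0r; apply: DM.
    have h2 : order_dom M N (b + a) by rewrite addrC; apply: DS.
    have := Hcomp 0 b a D0 (DN b hb) (DM a ha) h1 h2 (posN b hb).1.
    by rewrite add0r addrC.
  apply/eqP => e; have : a + 0 = a + b by rewrite addr0.
  by move/addrI => b0; apply: (posN b hb).2; rewrite -b0.
have [m mM Hm] := @ex_max _ (order_dom M N) le Hr Htrans Htot (enum_fset (ground M))
   ltac:(by rewrite -size_eq0 -/(#|` ground M|) cM) (fun x h => DM x h).
have nS := Hmax m mM Hm.
have HBM : #|` BM| = n.
  apply/eqP; rewrite eqn_leq Mmax //= leqNgt; apply/negP => lt.
  have [x xin xi] := indep_aug BMi B0i ltac:(by rewrite B0c).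
  have e := BMmax _ xi (fsubsetU1 x BM).
  move: xin; rewrite in_fsetD => /andP[xn _].
  by move: xn; rewrite -{1}e fsetU11.
have BMsub := indep_sub BMi.
have Bsub := indep_sub Bi.
exists B.
  split => // A Ai sub; apply/eqP; rewrite eq_sym.
  case: (fsubset_leqif_cards sub) => _ <-.
  by rewrite eqn_leq fsubset_leq_card // Bc Nmax.
have [||| s [Hp Ha]] := @greedy G (fun a b => a + b \in ground M) (fun a x => le a x && (a != x)) n
  (enum_fset BM) (enum_fset B) HBM Bc.
- by move=> a _; rewrite eqxx andbF.
- move=> x y z xA yA zA /andP[lxy nxy] /andP[lyz nyz].
  have xM : x \in ground M by apply: (fsubsetP BMsub).
  have yM : y \in ground M by apply: (fsubsetP BMsub).
  have zM : z \in ground M by apply: (fsubsetP BMsub).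
  apply/andP; split; first exact: (Htrans x y z (DM _ xM) (DM _ yM) (DM _ zM)).
  apply/eqP => exz; subst z; move/eqP: nxy; apply.
  exact: Hanti (DM _ xM) (DM _ yM) lxy lyz.
- move=> a aA.
  have aM : a \in ground M by apply: (fsubsetP BMsub).
  set lt := fun x => le a x && (a != x).
  have H2 : (count lt (enum_fset (ground M)) <= count lt (enum_fset BM) + 1)%N.
    have := count_sub2 _ lt _ _ (fset_uniq BM) (fun x h => fsubsetP BMsub x h).
    by rewrite -/(#|` ground M|) -/(#|` BM|) cM HBM subSnn.
  case: (boolP (has (fun b => a + b \in ground M) (enum_fset B))); last first.
    by rewrite has_count -leqNgt leqn0 => /eqP ->.
  case/hasP => b0 b0B ab0M.
  have b0N : b0 \in ground N by apply: (fsubsetP Bsub).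
  have ltam : lt m.
    have /andP[l1 n1] := Hab a b0 aM b0N.
    have l2 := Hm _ ab0M.
    apply/andP; split; first exact: (Htrans a (a + b0) m (DM _ aM) (DM _ ab0M) (DM _ mM)).
    apply/eqP => am; subst m; move/eqP: n1; apply.
    exact: Hanti (DM _ aM) (DM _ ab0M) l1 l2.
  have H1 : (count (fun b => (a + b)%R \in ground M) (enum_fset B) <=
     count (predI (fun x => x != m) lt) (enum_fset (ground M)))%N.
    rewrite -!size_filter -(size_map (fun b => (a + b)%R)).
    apply: uniq_leq_size.
      by rewrite (map_inj_uniq (addrI a)) filter_uniq // fset_uniq.
    move=> x /mapP[b]; rewrite mem_filter => /andP[abM bB] ->.
    have bN : b \in ground N by apply: (fsubsetP Bsub).
    rewrite mem_filter abM andbT /=; apply/andP; split; last exact: (Hab a b aM bN).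
    apply/eqP => e; apply: nS; exists a, b; split => //; exact/esym/e.
  have H3 : (count (predI (fun x => x != m) lt) (enum_fset (ground M)) + 1 <=
      count lt (enum_fset (ground M)))%N.
    have := count_predC (fun x => x != m) (filter lt (enum_fset (ground M))).
    rewrite !count_filter size_filter => <-.
    rewrite leq_add2l -has_count; apply/hasP; exists m => //=.
    by rewrite eqxx.
  apply: (leq_trans H1); rewrite -(leq_add2r 1); exact: (leq_trans H3 H2).
by exists s.
Qed.
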